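(* Let $F$ be a field of characteristic $0$, $d\ge1$, and let $\lambda,\mu$ be partitions with $\lambda\subset\mu$. (1) If $ST(\lambda)$ is a tensor polynomial identity for $M_d(F)$, then $ST(\mu)$ is a tensor polynomial identity for $M_d(F)$. (2) If $ST(\mu)$ is not a tensor polynomial identity for $M_d(F)$, then $ST(\lambda)$ is not a tensor polynomial identity for $M_d(F)$.
   Context: For partitions $\lambda,\mu$, $\lambda\subset\mu$ means $\lambda_i\le\mu_i$ for all $i$ (parts beyond the length taken as $0$), i.e. the Young diagram of $\lambda$ fits in that of $\mu$. For $\lambda=(h_1,\dots,h_n)\vdash k$, $ST(\lambda)(x_1,\dots,x_k):=\sum_{\tau\in S_k}\epsilon_\tau(X_1\otimes\cdots\otimes X_n)(x_{\tau(1)},\dots,x_{\tau(k)})\in F\langle X\rangle^{\otimes n}$ with $X_j:=x_{h_1+\dots+h_{j-1}+1}\cdots x_{h_1+\dots+h_j}$, $F\langle X\rangle$ the free associative algebra. A tensor polynomial identity (TPI) for $M_d(F)$ is a tensor polynomial vanishing under every evaluation $x_i\mapsto A_i\in M_d(F)$. *)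

(* Defs.v *)
From HB Require Import structures.
From mathcomp Require Import all_boot all_order all_algebra all_fingroup.
Set Implicit Arguments. Unset Strict Implicit. Unset Printing Implicit Defensive.
Import Order.TTheory GRing.Theory.
Local Open Scope ring_scope.

Definition is_partition (l : seq nat) : bool :=
  sorted geq l && all (fun x => 0 < x)%N l.

Definition part_sub (l m : seq nat) : Prop :=
  forall i : nat, (nth 0 l i <= nth 0 m i)%N.

Definition perm_nat (k : nat) (t : 'S_k) (i : nat) : nat :=
  if insub i is Some o then val (t o) else i.

(* Evaluation of the j-th tensor factor X_j(x_{t(1)},...,x_{t(k)}) at x_i := A i
   (0-indexed): the ordered product of A (t i) for i in the j-th block
   [h_1+...+h_{j}, h_1+...+h_{j+1}). *)
Definition block_eval (F : fieldType) (d : nat) (l : seq nat)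
    (A : nat -> 'M[F]_d) (t : 'S_(sumn l)) (j : nat) : 'M[F]_d :=
  let s := sumn (take j l) in
  \big[mulmx/1%:M]_(s <= i < s + nth 0 l j) A (perm_nat t i).

(* Coefficient of the basis tensor E_{c 0} (x) ... (x) E_{c (n-1)} of
   M_d(F)^{(x) n} in the evaluation of ST(l) at x_i := A i. *)
Definition ST_coeff (F : fieldType) (d : nat) (l : seq nat)
    (A : nat -> 'M[F]_d) (c : 'I_(size l) -> 'I_d * 'I_d) : F :=
  \sum_(t : 'S_(sumn l))
     (-1) ^+ (odd_perm t) *
     \prod_(j < size l) block_eval A t j (c j).1 (c j).2.

(* ST(l) is a tensor polynomial identity for M_d(F): every evaluation is the
   zero tensor, i.e. all its coordinates in the standard basis vanish. *)
Definition ST_is_TPI (F : fieldType) (d : nat) (l : seq nat) : Prop :=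
  forall (A : nat -> 'M[F]_d) (c : 'I_(size l) -> 'I_d * 'I_d),
    ST_coeff A c = 0.

(* Main.v *)
Require Import Defs.
From HB Require Import structures.
From mathcomp Require Import all_boot all_order all_algebra all_fingroup.
Set Implicit Arguments. Unset Strict Implicit. Unset Printing Implicit Defensive.
Import GRing.Theory.

Section Nat.
Lemma sumn_take_set (l : seq nat) j j' : (j < size l)%N ->
  sumn (take j' (set_nth 0 l j (nth 0 l j).+1)) = (sumn (take j' l) + (j < j'))%N.
Proof.
elim: l j j' => [|x l IH] [|j] [|j'] //= lt.
- by move=> *; rewrite addSn addn1.
- by rewrite IH // addnA ltnS.
Qed.

Lemma size_set' (l : seq nat) j v : (j < size l)%N -> size (set_nth 0 l j v) = size l.
Proof. by move=> lt; rewrite size_set_nth; apply/maxn_idPr. Qed.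

Lemma sumn_set (l : seq nat) j : (j < size l)%N ->
  sumn (set_nth 0 l j (nth 0 l j).+1) = (sumn l).+1.
Proof.
move=> lt; have := sumn_take_set (size l) lt.
by rewrite take_size take_oversize ?size_set' // lt addn1.
Qed.

Lemma sumn_takeS (l : seq nat) j : sumn (take j.+1 l) = (sumn (take j l) + nth 0 l j)%N.
Proof.
elim: l j => [|x l IH] [|j] //=; try by rewrite ?addn0.
- by rewrite take0 addn0.
- by rewrite IH addnA.
Qed.

Lemma sumn_take_le (l : seq nat) j : (sumn (take j l) <= sumn l)%N.
Proof. by rewrite -{2}(cat_take_drop j l) sumn_cat leq_addr. Qed.

Lemma sumn_take_mono (l : seq nat) j j' : (j <= j')%N ->
  (sumn (take j l) <= sumn (take j' l))%N.
Proof. by move=> le; rewrite -(take_takel _ le) sumn_take_le. Qed.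
End Nat.

Section Main.
Variables (F : fieldType) (d : nat).
Local Open Scope ring_scope.

Definition mxmul (A B : 'M[F]_d) : 'M[F]_d := A *m B.
HB.instance Definition _ := Monoid.isLaw.Build 'M[F]_d 1%:M mxmul
  (@mulmxA F d d d d) (@mul1mx F d d) (@mulmx1 F d d).

Definition bev k (l : seq nat) (A : nat -> 'M[F]_d) (t : 'S_k) j : 'M[F]_d :=
  let s := sumn (take j l) in
  \big[mulmx/1%:M]_(s <= i < s + nth 0%N l j) A (perm_nat t i).

Definition G k (l : seq nat) (A : nat -> 'M[F]_d) (c : nat -> 'I_d * 'I_d) : F :=
  \sum_(t : 'S_k) (-1) ^+ (odd_perm t) *
     \prod_(0 <= j < size l) bev l A t j (c j).1 (c j).2.

Definition TPIG l := forall A c, G (sumn l) l A c = 0.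

Lemma TPI_G l : ST_is_TPI F d l -> TPIG l.
Proof.
move=> H A c; rewrite -(H A (fun j => c (val j))) /ST_coeff /G.
apply: eq_bigr => t _; congr (_ * _).
by rewrite big_mkord.
Qed.

Lemma G_TPI l : (0 < d)%N -> TPIG l -> ST_is_TPI F d l.
Proof.
move=> d0 H A c.
pose c' j := if insub j is Some o then c o else (Ordinal d0, Ordinal d0).
rewrite -(H A c') /ST_coeff /G; apply: eq_bigr => t _; congr (_ * _).
by rewrite big_mkord; apply: eq_bigr => j _; rewrite /c' valK.
Qed.

Lemma bev_rcons0 k l A (t : 'S_k) j : (j < size l)%N ->
  bev (rcons l 0%N) A t j = bev l A t j.
Proof. by move=> lt; rewrite /bev -cats1 takel_cat ?nth_cat ?lt //; exact: ltnW. Qed.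

Lemma TPIG_rcons0 l : TPIG l -> TPIG (rcons l 0%N).
Proof.
move=> H A c; rewrite sumn_rcons addn0.
transitivity ((1%:M : 'M[F]_d) (c (size l)).1 (c (size l)).2 * G (sumn l) l A c);
  last by rewrite H mulr0.
rewrite /G mulr_sumr; apply: eq_bigr => t _.
rewrite size_rcons big_nat_recr //=.
have -> : bev (rcons l 0%N) A t (size l) = 1%:M.
  by rewrite /bev -cats1 nth_cat ltnn subnn /= addn0 big_geq.
rewrite (eq_big_nat _ _ (F2 := fun j => bev l A t j (c j).1 (c j).2)); last first.
  by move=> j /andP[_ lt]; rewrite bev_rcons0.
by rewrite mulrA mulrC.
Qed.


Lemma sum_perm_lift n (p : 'I_n.+1) (f : 'S_n.+1 -> F) :
  \sum_(s : 'S_n.+1) f s = \sum_(q : 'I_n.+1) \sum_(t : 'S_n) f (lift_perm p q t).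
Proof.
rewrite (partition_big (fun s : 'S_n.+1 => s p) predT) //=.
apply: eq_bigr => j0 _.
rewrite (reindex (lift_perm p j0)) /=; last first.
  pose ulsf i (s : 'S_n.+1) k := odflt k (unlift (s i) (s (lift i k))).
  have ulsfK i (s : 'S_n.+1) k: lift (s i) (ulsf i s k) = s (lift i k).
    rewrite /ulsf; have:= neq_lift i k.
    by rewrite -(can_eq (permK s)) => /unlift_some[] ? ? ->.
  have inj_ulsf: injective (ulsf p _).
    move=> s; apply: can_inj (ulsf (s p) s^-1%g) _ => k'.
    by rewrite {1}/ulsf ulsfK !permK liftK.
  exists (fun s => perm (inj_ulsf s)) => [s _ | s].
    by apply/permP=> k'; rewrite permE /ulsf lift_perm_lift lift_perm_id liftK.
  move/(s _ =P _) => si0; apply/permP=> k.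
  case: (unliftP p k) => [k'|] ->; rewrite ?lift_perm_id //.
  by rewrite lift_perm_lift -si0 permE ulsfK.
by apply: eq_bigl => s; rewrite lift_perm_id eqxx.
Qed.

Lemma perm_nat_lift k (p q : 'I_k.+1) (t : 'S_k) i : (i < k)%N ->
  perm_nat (lift_perm p q t) (bump p i) = bump q (perm_nat t i).
Proof.
move=> lt; rewrite /perm_nat.
rewrite (_ : bump p i = val (lift p (Ordinal lt))) // valK lift_perm_lift.
case: insubP => [o _ vo|]; last by rewrite lt.
by congr (bump q (val (t _))); apply: val_inj.
Qed.

Lemma perm_nat_lift_lt k (p q : 'I_k.+1) (t : 'S_k) i : (i < k)%N -> (i < p)%N ->
  perm_nat (lift_perm p q t) i = bump q (perm_nat t i).
Proof.
move=> lt lp; rewrite -(perm_nat_lift p) //.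
by rewrite /bump leqNgt lp add0n.
Qed.

Lemma perm_nat_lift_ge k (p q : 'I_k.+1) (t : 'S_k) i : (i < k)%N -> (p <= i)%N ->
  perm_nat (lift_perm p q t) i.+1 = bump q (perm_nat t i).
Proof.
move=> lt lp; rewrite -(perm_nat_lift p) //.
by rewrite /bump lp add1n.
Qed.

Lemma perm_nat_lift_p k (p q : 'I_k.+1) (t : 'S_k) :
  perm_nat (lift_perm p q t) p = q.
Proof. by rewrite /perm_nat valK lift_perm_id. Qed.

Lemma bev_lift l j (A : nat -> 'M[F]_d) (p q : 'I_(sumn l).+1) (t : 'S_(sumn l)) j' :
  (j < size l)%N -> (j' < size l)%N -> val p = (sumn (take j l) + nth 0%N l j)%N ->
  bev (set_nth 0%N l j (nth 0%N l j).+1) A (lift_perm p q t) j' =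
  bev l (fun i => A (bump q i)) t j' *m (if j' == j then A q else 1%:M).
Proof.
move=> lt lt' hp; rewrite /bev sumn_take_set // nth_set_nth /=.
have hk : (sumn (take j'.+1 l) <= sumn l)%N := sumn_take_le _ _.
rewrite sumn_takeS in hk.
case: (ltngtP j' j) => [lt2|gt2|e].
- rewrite addn0 mulmx1.
  apply: eq_big_nat => i /andP[_ hi].
  have h1 : (i < sumn l)%N := leq_trans hi hk.
  have h2 : (i < p)%N.
    have h3 : (sumn (take j'.+1 l) <= sumn (take j l))%N := sumn_take_mono _ lt2.
    rewrite sumn_takeS in h3.
    by rewrite hp; exact: leq_trans hi (leq_trans h3 (leq_addr _ _)).
  by rewrite perm_nat_lift_lt.
- rewrite (_ : nat_of_bool true = 1%N) // mulmx1 big_addn.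
  have -> : (sumn (take j' l) + 1 + nth 0%N l j' - 1 = sumn (take j' l) + nth 0%N l j')%N.
    by rewrite addnAC addnK.
  apply: eq_big_nat => i /andP[hi1 hi2].
  have h1 : (i < sumn l)%N := leq_trans hi2 hk.
  have h2 : (p <= i)%N.
    have h3 : (sumn (take j.+1 l) <= sumn (take j' l))%N := sumn_take_mono _ gt2.
    rewrite sumn_takeS in h3.
    by rewrite hp; exact: leq_trans h3 hi1.
  by rewrite addn1 perm_nat_lift_ge.
- subst j'; rewrite addn0 addnS (big_nat_recr _ _ (op := mxmul)) ?leq_addr //=.
  rewrite /mxmul -hp perm_nat_lift_p; congr (_ *m _).
  apply: eq_big_nat => i /andP[_ hi].
  have h2 : (i < p)%N := hi.
  have h1 : (i < sumn l)%N := leq_trans hi (ltn_ord p).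
  by rewrite perm_nat_lift_lt.
Qed.

Definition cr (c : nat -> 'I_d * 'I_d) j (r : 'I_d) j' :=
  if j' == j then ((c j).1, r) else c j'.

Lemma prod_lift l j A (p q : 'I_(sumn l).+1) (t : 'S_(sumn l)) c :
  (j < size l)%N -> val p = (sumn (take j l) + nth 0%N l j)%N ->
  \prod_(0 <= j' < size l)
     bev (set_nth 0%N l j (nth 0%N l j).+1) A (lift_perm p q t) j' (c j').1 (c j').2 =
  \sum_(r < d) A q r (c j).2 *
     \prod_(0 <= j' < size l) bev l (fun i => A (bump q i)) t j' (cr c j r j').1 (cr c j r j').2.
Proof.
move=> lt hp.
rewrite (eq_big_nat _ _ (F2 := fun j' => (bev l (fun i => A (bump q i)) t j' *m
   (if j' == j then A q else 1%:M)) (c j').1 (c j').2)); last first.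
  by move=> j' /andP[_ h]; rewrite bev_lift.
have jin : j \in index_iota 0 (size l) by rewrite mem_index_iota.
rewrite (bigD1_seq j) ?iota_uniq //= eqxx mxE big_distrl /=.
set P0 := \big[*%R/1]_(j' <- index_iota 0 (size l) | j' != j)
   bev l (fun i => A (bump q i)) t j' (c j').1 (c j').2.
have -> : \big[*%R/1]_(j' <- index_iota 0 (size l) | j' != j)
   (bev l (fun i => A (bump q i)) t j' *m (if j' == j then A q else 1%:M)) (c j').1 (c j').2 = P0.
  by apply: eq_bigr => j' /negbTE ->; rewrite mulmx1.
apply: eq_bigr => r _.
rewrite (bigD1_seq j) ?iota_uniq // /cr eqxx /=.
have -> : \big[*%R/1]_(j' <- index_iota 0 (size l) | j' != j)
   bev l (fun i => A (bump q i)) t j' (if j' == j then ((c j).1, r) else c j').1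
     (if j' == j then ((c j).1, r) else c j').2 = P0.
  by apply: eq_bigr => j' /negbTE ->.
by rewrite [RHS]mulrA [A q r _ * _]mulrC.
Qed.

Lemma TPIG_incr l j : (j < size l)%N -> TPIG l -> TPIG (set_nth 0%N l j (nth 0%N l j).+1).
Proof.
move=> lt H A c; rewrite /G sumn_set // size_set' //.
have hp : (sumn (take j l) + nth 0%N l j < (sumn l).+1)%N.
  by rewrite ltnS -sumn_takeS sumn_take_le.
rewrite (sum_perm_lift (Ordinal hp)).
apply: big1 => q _.
rewrite (eq_bigr (fun t => (-1) ^+ (odd (Ordinal hp) (+) odd q) *
   \sum_(r < d) (A q r (c j).2 * ((-1) ^+ odd_perm t *
   \prod_(0 <= j' < size l) bev l (fun i => A (bump q i)) t j' (cr c j r j').1 (cr c j r j').2)))); last first.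
  move=> t _; rewrite odd_lift_perm signr_addb (prod_lift _ _ _ _ lt) //.
  rewrite -mulrA; congr (_ * _); rewrite mulr_sumr; apply: eq_bigr => r _; exact: mulrCA.
rewrite -mulr_sumr exchange_big /= big1 ?mulr0 // => r _.
rewrite -mulr_sumr.
have := H (fun i => A (bump q i)) (cr c j r); rewrite /G => ->.
by rewrite mulr0.
Qed.

Lemma TPIG_pad l n : TPIG l -> TPIG (l ++ nseq n 0%N).
Proof.
move=> H; elim: n => [|n IH]; first by rewrite cats0.
have -> : l ++ nseq n.+1 0%N = rcons (l ++ nseq n 0%N) 0%N.
  rewrite -cats1 -catA; congr (_ ++ _); by elim: n {IH} => //= n ->.
exact: TPIG_rcons0.
Qed.

Lemma reach m : forall n l, size l = size m -> part_sub l m ->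
  (\sum_(i < size m) (nth 0%N m i - nth 0%N l i))%N = n -> TPIG l -> TPIG m.
Proof.
elim=> [|n IH] l sz sub D H.
- have El : l = m.
    apply: (@eq_from_nth _ 0%N) => // i hi.
    rewrite sz in hi.
    move/eqP: D; rewrite sum_nat_eq0 => /forallP /(_ (Ordinal hi)) /=.
    rewrite subn_eq0 => h; apply/eqP; rewrite eqn_leq h andbT; exact: (sub i).
  by rewrite -El.
- case: (pickP (fun i : 'I_(size m) => nth 0%N l i < nth 0%N m i)%N) => [i hi | none]; last first.
    exfalso; move: D; rewrite big1 // => i _; apply/eqP; rewrite subn_eq0 leqNgt.
    exact/negbT/none.
  have li : (i < size l)%N by rewrite sz.
  apply: (IH (set_nth 0%N l i (nth 0%N l i).+1)); last exact: TPIG_incr.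
  + by rewrite size_set'.
  + move=> i'; rewrite nth_set_nth /=; case: eqP => [->|_] //; exact: (sub i').
  + apply: succn_inj; rewrite -D (bigD1 i) //= [in RHS](bigD1 i) //= nth_set_nth /= eqxx.
    rewrite -addSn subnSK //; congr (_ + _)%N; apply: eq_bigr => i' ne.
    rewrite nth_set_nth /= (_ : (val i' == val i) = false) //; exact: negbTE ne.
Qed.

End Main.

Theorem mainTheorem10 (F : fieldType) (d : nat) (l m : seq nat) :
  [pchar F]%R =i pred0 -> (0 < d)%N ->
  is_partition l -> is_partition m -> part_sub l m ->
  (ST_is_TPI F d l -> ST_is_TPI F d m) /\
  (~ ST_is_TPI F d m -> ~ ST_is_TPI F d l).
Proof.
move=> _ d0 pl pm sub.
have part1 : ST_is_TPI F d l -> ST_is_TPI F d m.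
  move=> /TPI_G H; apply: G_TPI d0 _.
  have szle : (size l <= size m)%N.
    rewrite leqNgt; apply/negP => hlt.
    case/andP: pl => _ /allP posl.
    have := sub (size m); rewrite (nth_default 0%N (leqnn _)) leqn0 => /eqP h0.
    by have := posl _ (mem_nth 0%N hlt); rewrite h0.
  pose l0 := l ++ nseq (size m - size l) 0%N.
  apply: (@reach _ _ m _ l0 _ _ erefl (TPIG_pad _ H)).
  + by rewrite size_cat size_nseq subnKC.
  + move=> i; rewrite nth_cat; case: ifP => _; first exact: (sub i).
    by rewrite nth_nseq; case: ifP.
split => // nm nl; apply: nm; exact: part1.
Qed.
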